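(* (1) Every (unpointed) endomorphism of $\mathbf{P}^1_k$ is unpointed naively homotopic to a pointed one. (2) Let $f,g$ be pointed rational functions. Then $f\overset{\mathrm{u}}{\sim}g$ if and only if there exists $\lambda\in k^\times$ with $f\overset{\mathrm{p}}{\sim}\lambda^2g$.
   Context: Let $k$ be a field. An (unpointed) endomorphism of $\mathbf{P}^1_k$ of degree $n$ is given by a pair $(A,B)$ of polynomials of degree $\le n$ in $k[X]$ with $\mathrm{res}_{n,n}(A,B)\neq0$, up to a common scalar (a $k$-point of the open subscheme $\mathscr{U}_n\subset\mathbf{P}^{2n+1}$ complementary to the resultant hypersurface); an unpointed naive homotopy is a $k[T]$-point of $\mathscr{U}_n$, and $\overset{\mathrm{u}}{\sim}$ is the equivalence relation generated by $F(0)\sim F(1)$. A pointed rational function (base point $\infty=[1:0]$ fixed) of degree $n$ is a pair $\frac{A}{B}$ with $A$ monic of degree $n$, $\deg B<n$ and $\mathrm{res}_{n,n}(A,B)$ invertible; pointed naive homotopies are such pairs over $k[T]$, and $\overset{\mathrm{p}}{\sim}$ is the equivalence relation they generate. For $g=\frac{A}{B}$ pointed, $\lambda^2g$ is the pointed rational function $\frac{A}{\lambda^{-2}B}$. *)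

(* Defs.v *)
From HB Require Import structures.
From mathcomp Require Import all_boot all_order all_algebra.
Set Implicit Arguments. Unset Strict Implicit. Unset Printing Implicit Defensive.
Import GRing.Theory.
Local Open Scope ring_scope.

(* res_{n,n}(A,B): determinant of the (transposed) Sylvester matrix of A, B
   viewed as polynomials of FORMAL degree n (rows: X^i*A, X^i*B for i < n,
   columns: coefficients of X^0..X^(2n-1)).  Agrees with res_{n,n} up to sign. *)
Definition resnn (R : comUnitRingType) (n : nat) (A B : {poly R}) : R :=
  \det (\matrix_(i < n + n, j < n + n)
          match split i with
          | inl i' => ('X^i' * A)`_j
          | inr i' => ('X^i' * B)`_j
          end).

(* the 2n+2 coefficients of (A,B) generate the unit ideal
   (a point of P^{2n+1} over R, R = k or k[T]) *)
Definition unimodular (R : comUnitRingType) (n : nat) (A B : {poly R}) : Prop :=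
  exists u v : nat -> R, \sum_(i < n.+1) (u i * A`_i + v i * B`_i) = 1.

(* (A,B) is an R-point of U_n (unpointed endomorphism of degree n over R) *)
Definition Upoint (R : comUnitRingType) (n : nat) (A B : {poly R}) : Prop :=
  [/\ (size A <= n.+1)%N, (size B <= n.+1)%N, unimodular n A B
    & resnn n A B \is a GRing.unit].

(* A/B is a pointed rational function of degree n over R *)
Definition Ppoint (R : comUnitRingType) (n : nat) (A B : {poly R}) : Prop :=
  [/\ A \is monic, size A = n.+1, (size B <= n)%N
    & resnn n A B \is a GRing.unit].

Definition evT (k : fieldType) (t : k) (A : {poly {poly k}}) : {poly k} :=
  map_poly (fun p : {poly k} => p.[t]) A.

Inductive eqclos (T : Type) (R : T -> T -> Prop) : T -> T -> Prop :=
| ec_step x y : R x y -> eqclos R x y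
| ec_refl x : eqclos R x x
| ec_sym x y : eqclos R x y -> eqclos R y x
| ec_trans x y z : eqclos R x y -> eqclos R y z -> eqclos R x z.

(* generators of unpointed naive homotopy on representatives (A,B);
   scaling identifies representatives of the same point of P^{2n+1} *)
Inductive usim_step (k : fieldType) (n : nat) :
  {poly k} * {poly k} -> {poly k} * {poly k} -> Prop :=
| us_scale (A B : {poly k}) (c : k) :
    Upoint n A B -> c != 0 -> usim_step n (A, B) (c *: A, c *: B)
| us_homot (FA FB : {poly {poly k}}) :
    Upoint n FA FB -> usim_step n (evT 0 FA, evT 0 FB) (evT 1 FA, evT 1 FB).

Definition usim (k : fieldType) (n : nat) := eqclos (@usim_step k n).

Inductive psim_step (k : fieldType) (n : nat) :
  {poly k} * {poly k} -> {poly k} * {poly k} -> Prop :=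
| ps_homot (FA FB : {poly {poly k}}) :
    Ppoint n FA FB -> psim_step n (evT 0 FA, evT 0 FB) (evT 1 FA, evT 1 FB).

Definition psim (k : fieldType) (n : nat) := eqclos (@psim_step k n).

(* Main.v *)
Require Import Defs.
From mathcomp Require Import all_boot all_order all_algebra.
From mathcomp Require Import ring zify.
Import GRing.Theory.
Local Open Scope ring_scope.
Set Implicit Arguments. Unset Strict Implicit. Unset Printing Implicit Defensive.

Section Gen.
Variable R : comUnitRingType.
Implicit Types (A B : {poly R}) (p : {poly R} * {poly R}).

Definition tr (a b c d : R) p : {poly R} * {poly R} :=
  (a *: p.1 + b *: p.2, c *: p.1 + d *: p.2).

Definition UP n p := Upoint n p.1 p.2.
Definition PP n p := Ppoint n p.1 p.2.

Definition sylv n A B : 'M[R]_(n + n) :=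
  \matrix_(i < n + n, j < n + n)
          match split i with
          | inl i' => ('X^i' * A)`_j
          | inr i' => ('X^i' * B)`_j
          end.

Definition sylh n A : 'M[R]_(n, n + n) := \matrix_(i < n, j < n + n) ('X^i * A)`_j.

Lemma sylvE n A B : sylv n A B = col_mx (sylh n A) (sylh n B).
Proof. by apply/matrixP => i j; rewrite !mxE; case: split => i'; rewrite mxE. Qed.

Lemma resnnE n A B : resnn n A B = \det (sylv n A B).
Proof. by []. Qed.

Lemma sylhD n a b A B : sylh n (a *: A + b *: B) = a *: sylh n A + b *: sylh n B.
Proof.
apply/matrixP => i j; rewrite !mxE mulrDr coefD -!scalerAr !coefZ.
by [].
Qed.

Definition blk n (a b c d : R) : 'M[R]_(n + n) :=
  block_mx (a%:M) (b%:M) (c%:M) (d%:M).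

Lemma sylv_tr n a b c d A B :
  sylv n (a *: A + b *: B) (c *: A + d *: B) = blk n a b c d *m sylv n A B.
Proof.
by rewrite !sylvE mul_block_col !mul_scalar_mx !sylhD.
Qed.

Lemma blk_unit n a b c d : (a * d - b * c) \is a GRing.unit ->
  \det (blk n a b c d) \is a GRing.unit.
Proof.
move=> H.
have E : blk n a b c d *m blk n d (- b) (- c) a = (a * d - b * c)%:M.
  rewrite /blk mulmx_block -!scalar_mxM.
  rewrite -!raddfD /= (scalar_mx_block n n).
  have -> : a * d + b * - c = a * d - b * c by ring.
  have -> : a * - b + b * a = 0 by ring.
  have -> : c * d + d * - c = 0 by ring.
  have -> : c * - b + d * a = a * d - b * c by ring.
  by rewrite !raddf0.
have : \det (blk n a b c d *m blk n d (- b) (- c) a) \is a GRing.unit.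
  by rewrite E det_scalar unitrX.
by rewrite det_mulmx unitrM => /andP[].
Qed.

Lemma resnn_tr n a b c d p : (a * d - b * c) \is a GRing.unit ->
  resnn n p.1 p.2 \is a GRing.unit -> resnn n (tr a b c d p).1 (tr a b c d p).2 \is a GRing.unit.
Proof.
move=> H1 H2; rewrite /= resnnE sylv_tr det_mulmx unitrM blk_unit //.
Qed.


Lemma size_lin n a b A B : (size A <= n.+1)%N -> (size B <= n.+1)%N ->
  (size (a *: A + b *: B)%R <= n.+1)%N.
Proof.
move=> hA hB; apply: leq_trans (size_polyD _ _) _; rewrite geq_max.
by rewrite (leq_trans (size_scale_leq _ _)) // (leq_trans (size_scale_leq _ _)).
Qed.

Lemma coef_lin a b A B i : (a *: A + b *: B)`_i = a * A`_i + b * B`_i.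
Proof. by rewrite coefD !coefZ. Qed.

Lemma unimod_tr n a b c d p : (a * d - b * c) \is a GRing.unit ->
  unimodular n p.1 p.2 -> unimodular n (tr a b c d p).1 (tr a b c d p).2.
Proof.
move=> H [u [v huv]].
set D := a * d - b * c.
exists (fun i => D^-1 * (u i * d - v i * c)), (fun i => D^-1 * (v i * a - u i * b)).
rewrite -[RHS]huv -[RHS]mul1r -(mulVr H) -mulrA !mulr_sumr; apply: eq_bigr => i _.
rewrite /= !coef_lin /D; ring.
Qed.

Lemma UP_tr n a b c d p : (a * d - b * c) \is a GRing.unit ->
  UP n p -> UP n (tr a b c d p).
Proof.
move=> H [h1 h2 h3 h4]; split.
- exact: size_lin.
- exact: size_lin.
- exact: unimod_tr.
- exact: resnn_tr.
Qed.

Lemma PPE n p : PP n p <->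
  [/\ (size p.1 <= n.+1)%N, p.1`_n = 1, (size p.2 <= n.+1)%N, p.2`_n = 0
    & resnn n p.1 p.2 \is a GRing.unit].
Proof.
case: p => A B /=; split.
- case=> mA sA sB hr.
  have lA : A`_n = 1 by move/monicP: mA; rewrite lead_coefE sA.
  split => //; first by rewrite sA.
  + exact: leq_trans sB _.
  + by move/leq_sizeP: sB; apply.
- case=> sA cA sB cB hr; split => //.
  + have sA' : size A = n.+1.
      apply/eqP; rewrite eqn_leq sA /=.
      case: ltnP => // hs; move/leq_sizeP: hs => /(_ n (leqnn _)).
      by rewrite cA => /eqP; rewrite oner_eq0.
    by apply/monicP; rewrite lead_coefE sA'.
  + have sA' : size A = n.+1.
      apply/eqP; rewrite eqn_leq sA /=.
      case: ltnP => // hs; move/leq_sizeP: hs => /(_ n (leqnn _)).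
      by rewrite cA => /eqP; rewrite oner_eq0.
    by rewrite sA'.
  + apply/leq_sizeP => j; rewrite leq_eqVlt => /orP[/eqP <- //|hj].
    by move/leq_sizeP: sB; apply.
Qed.

Lemma PP_UP n p : PP n p -> UP n p.
Proof.
move=> /PPE[s1 c1 s2 c2 hr]; split => //.
exists (fun i => if i == n then 1 else 0), (fun _ => 0).
rewrite big_ord_recr /= eqxx big1 ?add0r; first by rewrite c1 mul0r addr0 mul1r.
move=> i _; rewrite /= (ltn_eqF (ltn_ord i)) !mul0r addr0 //.
Qed.

Lemma lead_unimod n A B : Upoint n A B -> exists u v : R, u * A`_n + v * B`_n = 1.
Proof.
case=> sA sB [u [v huv]] hr.
case: n sA sB u v huv hr => [|m] sA sB u v huv hr.
  by exists (u 0%N), (v 0%N); rewrite -huv big_ord1.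
have hj0 : (m.+1 + m < m.+1 + m.+1)%N by rewrite addnS ltnSn.
pose j0 : 'I_(m.+1 + m.+1) := Ordinal hj0.
have HA : forall (P : {poly R}) (i : 'I_m.+1), (size P <= m.+2)%N ->
   ('X^i * P)`_j0 = if i == ord_max then P`_m.+1 else 0.
  move=> P i sP; rewrite coefXnM /=.
  have hi := ltn_ord i.
  rewrite ltnNge (leq_trans (ltnW hi)) ?leq_addr //=.
  case: eqP => [-> /=|ne]; first by congr (_`_ _); rewrite addnK.
  move/leq_sizeP: sP; apply.
  have : (i < m)%N.
    by rewrite ltn_neqAle -ltnS hi andbT; apply/eqP => e; apply: ne; apply: val_inj.
  move=> him; lia.
move: hr; rewrite resnnE (expand_det_col _ j0) big_split_ord /=.
set S := sylv m.+1 A B.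
have EA : forall i, S (lshift m.+1 i) j0 = if i == ord_max then A`_m.+1 else 0.
  by move=> i; rewrite /S mxE (unsplitK (inl _)) HA.
have EB : forall i, S (rshift m.+1 i) j0 = if i == ord_max then B`_m.+1 else 0.
  by move=> i; rewrite /S mxE (unsplitK (inr _)) HA.
rewrite !big_ord_recr /= !EA !EB eqxx !big1 ?add0r => [hr|i _|i _]; last 2 first.
- rewrite EB (_ : (widen_ord _ i == ord_max) = false) ?mul0r //.
  by apply/eqP => /(congr1 val) /= E; move: (ltn_ord i); rewrite E ltnn.
- rewrite EA (_ : (widen_ord _ i == ord_max) = false) ?mul0r //.
  by apply/eqP => /(congr1 val) /= E; move: (ltn_ord i); rewrite E ltnn.
set r := _ + _ in hr.
exists (r^-1 * cofactor S (lshift m.+1 ord_max) j0), (r^-1 * cofactor S (rshift m.+1 ord_max) j0).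
rewrite -(mulVr hr) /r; ring.
Qed.

End Gen.

Section Map.
Variables (R S : comUnitRingType) (f : {rmorphism R -> S}).

Definition mapP (p : {poly R} * {poly R}) := (map_poly f p.1, map_poly f p.2).

Lemma resnn_map n A B : resnn n (map_poly f A) (map_poly f B) = f (resnn n A B).
Proof.
rewrite /resnn -det_map_mx; congr (\det _); apply/matrixP => i j; rewrite !mxE.
by case: split => i'; rewrite -(map_polyXn f) -rmorphM coef_map.
Qed.

Lemma size_map_le (A : {poly R}) : (size (map_poly f A) <= size A)%N.
Proof. exact: size_poly. Qed.

Lemma UP_map n p : UP n p -> UP n (mapP p).
Proof.
case=> s1 s2 [u [v huv]] hr; split.
- exact: leq_trans (size_map_le _) s1.
- exact: leq_trans (size_map_le _) s2.
- exists (fun i => f (u i)), (fun i => f (v i)).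
  rewrite /= -(rmorph1 f) -huv rmorph_sum; apply: eq_bigr => i _.
  by rewrite !coef_map rmorphD !rmorphM.
- by rewrite /= resnn_map rmorph_unit.
Qed.

Lemma PP_map n p : PP n p -> PP n (mapP p).
Proof.
move=> /PPE[s1 c1 s2 c2 hr]; apply/PPE; split => /=.
- exact: leq_trans (size_map_le _) s1.
- by rewrite coef_map c1; apply: rmorph1.
- exact: leq_trans (size_map_le _) s2.
- by rewrite coef_map c2; apply: rmorph0.
- by rewrite resnn_map rmorph_unit.
Qed.

Lemma mapP_tr a b c d p :
  mapP (tr a b c d p) = tr (f a) (f b) (f c) (f d) (mapP p).
Proof.
by rewrite /mapP /tr /=; congr pair; rewrite rmorphD /= !map_polyZ.
Qed.

End Map.

Section Alg.
Variable R : comUnitRingType.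
Implicit Types (p : {poly R} * {poly R}).

Lemma tr_comp (a b c d a' b' c' d' : R) p :
  tr a b c d (tr a' b' c' d' p) =
  tr (a*a'+b*c') (a*b'+b*d') (c*a'+d*c') (c*b'+d*d') p.
Proof.
rewrite /tr /=; congr pair; rewrite !scalerDr !scalerA !scalerDl;
  rewrite -!addrA; congr (_ + _); rewrite addrC -!addrA; congr (_ + _); by rewrite addrC.
Qed.

Lemma tr_id p : tr 1 0 0 1 p = p.
Proof. by case: p => A B; rewrite /tr /= !scale1r !scale0r addr0 add0r. Qed.

Lemma tr_scale (c0 a b c d : R) (A B : {poly R}) :
  tr a b c d (c0 *: A, c0 *: B) = tr (a*c0) (b*c0) (c*c0) (d*c0) (A, B).
Proof. by rewrite /tr /= !scalerA. Qed.

Lemma tr_ext (a b c d a' b' c' d' : R) p : a = a' -> b = b' -> c = c' -> d = d' ->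
  tr a b c d p = tr a' b' c' d' p.
Proof. by move=> -> -> -> ->. Qed.

Lemma det1_unit : (1 : R) \is a GRing.unit. Proof. exact: unitr1. Qed.

End Alg.

Section K.
Variable k : fieldType.
Implicit Types (p x y z : {poly k} * {poly k}) (F : {poly {poly k}} * {poly {poly k}}).

Definition liftP p : {poly {poly k}} * {poly {poly k}} := mapP (polyC : {rmorphism k -> {poly k}}) p.
Definition evP (t : k) F : {poly k} * {poly k} := (evT t F.1, evT t F.2).

Lemma evPE t F : evP t F = mapP (horner_eval t) F.
Proof. by []. Qed.

Lemma evP_lift t p : evP t (liftP p) = p.
Proof.
case: p => A B; rewrite evPE /liftP /mapP /=; congr pair; apply/polyP => i;
  by rewrite !coef_map /= horner_evalE hornerC.
Qed.

Lemma ev_tr t a b c d F :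
  evP t (tr a b c d F) = tr a.[t] b.[t] c.[t] d.[t] (evP t F).
Proof. by rewrite !evPE mapP_tr. Qed.

Lemma us_homot' n F : UP n F -> usim n (evP 0 F) (evP 1 F).
Proof. by move=> H; apply: ec_step; apply: us_homot. Qed.

Lemma ps_homot' n F : PP n F -> psim n (evP 0 F) (evP 1 F).
Proof. by move=> H; apply: ec_step; apply: ps_homot. Qed.

Lemma usim_path n p (a b c d : {poly k}) : UP n p ->
  (a * d - b * c) \is a GRing.unit ->
  usim n (tr a.[0] b.[0] c.[0] d.[0] p) (tr a.[1] b.[1] c.[1] d.[1] p).
Proof.
move=> Hp Hu; have := @us_homot' n (tr a b c d (liftP p)).
rewrite !ev_tr !evP_lift; apply; apply: UP_tr => //; exact: UP_map.
Qed.

Lemma usim_shearU n p (c : k) : UP n p -> usim n p (tr 1 c 0 1 p).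
Proof.
move=> Hp; have := usim_path (a := 1) (b := c%:P * 'X) (c := 0) (d := 1) Hp.
rewrite !hornerE /= subr0 tr_id; apply; exact: unitr1.
Qed.

Lemma usim_shearL n p (c : k) : UP n p -> usim n p (tr 1 0 c 1 p).
Proof.
move=> Hp; have := usim_path (a := 1) (b := 0) (c := c%:P * 'X) (d := 1) Hp.
rewrite !hornerE /= subr0 tr_id; apply; exact: unitr1.
Qed.

Lemma usim_trans n x y z : usim n x y -> usim n y z -> usim n x z.
Proof. exact: ec_trans. Qed.

Lemma UP_tr1 n p (a b c d : k) : a * d - b * c = 1 -> UP n p -> UP n (tr a b c d p).
Proof. by move=> H; apply: UP_tr; rewrite H unitr1. Qed.

Lemma usim_SLc n p (a b c d : k) : a * d - b * c = 1 -> c != 0 -> UP n p ->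
  usim n p (tr a b c d p).
Proof.
move=> H hc Hp.
set x := (a - 1) / c; set z := (d - 1) / c.
have U1 : UP n (tr 1 z 0 1 p) by apply: UP_tr1 => //; ring.
have U2 : UP n (tr 1 0 c 1 (tr 1 z 0 1 p)) by apply: UP_tr1 => //; ring.
have E : tr 1 x 0 1 (tr 1 0 c 1 (tr 1 z 0 1 p)) = tr a b c d p.
  rewrite !tr_comp; apply: tr_ext.
  - by rewrite /x; field.
  - have hb : b = (a * d - 1) / c by rewrite -H; field.
    by rewrite hb /x /z; field.
  - ring.
  - by rewrite /z; field.
rewrite -E; apply: usim_trans (usim_shearU _ Hp) _.
apply: usim_trans (usim_shearL _ U1) _.
exact: usim_shearU.
Qed.

Lemma usim_SL n p (a b c d : k) : a * d - b * c = 1 -> UP n p ->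
  usim n p (tr a b c d p).
Proof.
move=> H Hp; have [c0|hc] := eqVneq c 0; last exact: usim_SLc.
subst c; move: H; rewrite mulr0 subr0 => H.
have hd : d != 0 by apply/eqP => d0; move: H; rewrite d0 mulr0 => /eqP; rewrite eq_sym oner_eq0.
have U1 : UP n (tr 1 0 1 1 p) by apply: UP_tr1 => //; ring.
have E : tr (a - b) b (- d) d (tr 1 0 1 1 p) = tr a b 0 d p.
  by rewrite tr_comp; apply: tr_ext; ring.
rewrite -E; apply: usim_trans (usim_shearL _ Hp) _.
apply: usim_SLc => //; last by rewrite oppr_eq0.
by rewrite -H; ring.
Qed.

Lemma Pt_UP n p : UP n p -> exists a b c d : k, a * d - b * c = 1 /\ PP n (tr a b c d p).
Proof.
move=> Hp; case: (Hp) => s1 s2 _ hr.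
have [u [v huv]] := lead_unimod Hp.
exists u, v, (- p.2`_n), (p.1`_n); split; first by rewrite -huv; ring.
apply/PPE; split => /=.
- exact: size_lin.
- by rewrite coef_lin.
- exact: size_lin.
- by rewrite coef_lin; ring.
- by apply: resnn_tr => //; rewrite (_ : _ - _ = 1) ?unitr1 // -huv; ring.
Qed.

Lemma K1 n p (b : k) : PP n p -> psim n p (tr 1 b 0 1 p).
Proof.
move=> Hp; have Hl := PP_map (polyC : {rmorphism k -> {poly k}}) Hp.
move/PPE: (Hl) => [s1 c1 s2 c2 hr].
have := @ps_homot' n (tr 1 (b%:P * 'X) 0 1 (liftP p)).
rewrite !ev_tr !evP_lift !hornerE /= tr_id; apply.
apply/PPE; split.
- exact: size_lin.
- by rewrite /= coef_lin [(liftP p).1`_n]c1 [(liftP p).2`_n]c2 mulr0 addr0 mulr1.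
- exact: size_lin.
- by rewrite /= coef_lin [(liftP p).1`_n]c1 [(liftP p).2`_n]c2 mulr0 mulr1 addr0.
- by apply: resnn_tr => //; rewrite mulr0 subr0 mulr1 unitr1.
Qed.

Definition sc (mu : k) p := (p.1, mu ^- 2 *: p.2).

Lemma sc_tr mu p : sc mu p = tr 1 0 0 (mu ^- 2) p.
Proof. by case: p => A B; rewrite /sc /tr /= !scale1r !scale0r addr0 add0r. Qed.

Lemma sc1 p : sc 1 p = p.
Proof. by case: p => A B; rewrite /sc /= expr1n invr1 scale1r. Qed.

Lemma sc_comp mu nu p : sc mu (sc nu p) = sc (mu * nu) p.
Proof. by rewrite /sc /= scalerA [in RHS]exprMn [in RHS]invfM. Qed.

Lemma Kabs n f (p1 p2 p3 p4 mu : k) : PP n f -> PP n (tr p1 p2 p3 p4 f) ->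
  p1 * p4 - p2 * p3 = mu ^+ 2 -> mu != 0 -> psim n f (sc mu (tr p1 p2 p3 p4 f)).
Proof.
move=> Hf Hg hd hmu.
move/PPE: (Hf) => [s1 c1 s2 c2 hr]; move/PPE: (Hg) => [t1 d1 t2 d2 hr'].
move: d1 d2; rewrite /= !coef_lin c1 c2 !mulr0 !mulr1 !addr0 => e1 e3.
subst p1 p3; move: hd; rewrite mulr0 subr0 mul1r => e4; subst p4.
have -> : sc mu (tr 1 p2 0 (mu ^+ 2) f) = tr 1 p2 0 1 f.
  rewrite sc_tr tr_comp; apply: tr_ext; try ring.
  by rewrite mul0r add0r mulVf // expf_neq0.
exact: K1.
Qed.

Lemma Kgen n x (a b c d a' b' c' d' mu : k) : a * d - b * c = 1 ->
  a' * d' - b' * c' = mu ^+ 2 -> mu != 0 ->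
  PP n (tr a b c d x) -> PP n (tr a' b' c' d' x) ->
  psim n (tr a b c d x) (sc mu (tr a' b' c' d' x)).
Proof.
move=> H H' hmu HM HN.
have E : tr a' b' c' d' x = tr (a' * d - b' * c) (b' * a - a' * b)
   (c' * d - d' * c) (d' * a - c' * b) (tr a b c d x).
  rewrite tr_comp; apply: tr_ext; rewrite -[LHS]mulr1 -H; ring.
rewrite E; apply: Kabs => //; first by rewrite -E.
by rewrite -H' -[RHS]mulr1 -H; ring.
Qed.

Lemma psim_sc n p q mu : psim n p q -> mu != 0 -> psim n (sc mu p) (sc mu q).
Proof.
move=> H hmu; elim: H => {p q}.
- move=> p q [FA FB HP].
  have := @ps_homot' n (tr 1 0 0 (mu ^- 2)%:P (FA, FB)).
  rewrite !ev_tr !hornerE -!sc_tr; apply.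
  have HP2 : PP n (FA, FB) := HP; move/PPE: HP2 => [s1 c1 s2 c2 hr]; apply/PPE; split.
  + exact: size_lin.
  + by rewrite /= coef_lin c1 c2; ring.
  + exact: size_lin.
  + by rewrite /= coef_lin c1 c2; ring.
  + apply: resnn_tr => //; rewrite mul1r mulr0 subr0.
    apply: (rmorph_unit (polyC : {rmorphism k -> {poly k}})).
    by rewrite unitfE invr_eq0 expf_neq0.
- move=> x; exact: ec_refl.
- move=> x y _ IH; exact: ec_sym.
- move=> x y z _ IH1 _ IH2; exact: ec_trans IH1 IH2.
Qed.

Definition Pt n x := exists a b c d : k, a * d - b * c = 1 /\ PP n (tr a b c d x).

Definition Inv n x y :=
  (forall a b c d a' b' c' d' : k, a * d - b * c = 1 -> a' * d' - b' * c' = 1 ->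
     PP n (tr a b c d x) -> PP n (tr a' b' c' d' y) ->
     exists lam : k, lam != 0 /\ psim n (tr a b c d x) (sc lam (tr a' b' c' d' y)))
  /\ (x = y \/ (Pt n x /\ Pt n y)).

Lemma Inv_refl n x : Inv n x x.
Proof.
split; last by left.
move=> a b c d a' b' c' d' H H' HM HN; exists 1; split; first exact: oner_neq0.
by apply: Kgen => //; rewrite ?expr1n // oner_neq0.
Qed.

Lemma Inv_sym n x y : Inv n x y -> Inv n y x.
Proof.
case=> H1 H2; split; last by case: H2 => [->|[]]; [left|right].
move=> a b c d a' b' c' d' H H' HM HN.
have [lam [hl hp]] := H1 _ _ _ _ _ _ _ _ H' H HN HM.
exists lam^-1; split; first by rewrite invr_eq0.
apply: ec_sym; have := psim_sc hp (mu := lam^-1); rewrite sc_comp mulVf // sc1.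
by apply; rewrite invr_eq0.
Qed.

Lemma Inv_trans n x y z : Inv n x y -> Inv n y z -> Inv n x z.
Proof.
case=> H1 H2 [H3 H4].
case: H2 => [exy|[Px Py]]; first by subst y; split.
case: H4 => [eyz|[Py' Pz]]; first by subst z; split => //; right.
split; last by right.
move=> a b c d a' b' c' d' H H' HM HN.
have [e [f [g [h [Hd HP]]]]] := Py.
have [l1 [hl1 hp1]] := H1 _ _ _ _ _ _ _ _ H Hd HM HP.
have [l2 [hl2 hp2]] := H3 _ _ _ _ _ _ _ _ Hd H' HP HN.
exists (l1 * l2); split; first by rewrite mulf_neq0.
apply: ec_trans hp1 _; rewrite -sc_comp; exact: psim_sc.
Qed.

Lemma UP_ev n F t : UP n F -> UP n (evP t F).
Proof. by move=> H; rewrite evPE; apply: UP_map. Qed.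

Lemma Inv_step n x y : usim_step n x y -> Inv n x y.
Proof.
case.
- move=> A B c HU hc.
  have HU' : UP n (A, B) by [].
  have E : (c *: A, c *: B) = tr c 0 0 c (A, B).
    by rewrite /tr /= !scale0r addr0 add0r.
  split; last first.
    right; split; first exact: Pt_UP.
    by rewrite E; apply: Pt_UP; apply: UP_tr => //; rewrite mulr0 subr0 unitrM unitfE hc.
  move=> a b c0 d a' b' c' d' H H' HM HN.
  exists c; split => //.
  rewrite tr_scale; apply: Kgen => //; last by rewrite -tr_scale.
  by rewrite -[RHS]mulr1 -H'; ring.
- move=> FA FB HU.
  have HU' : UP n (FA, FB) by [].
  change (Inv n (evP 0 (FA, FB)) (evP 1 (FA, FB))).
  split; last by right; split; apply: Pt_UP; apply: UP_ev.
  move=> a b c d a' b' c' d' H H' HM HN.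
  exists 1; split; first exact: oner_neq0.
  have [u [v huv]] := lead_unimod HU.
  set G := tr u v (- FB`_n) (FA`_n) (FA, FB).
  have HG : PP n G.
    case: HU => s1 s2 _ hr.
    apply/PPE; split.
    - exact: size_lin.
    - by rewrite /= coef_lin.
    - exact: size_lin.
    - by rewrite /= coef_lin; ring.
    - by apply: resnn_tr => //; rewrite (_ : _ - _ = 1) ?unitr1 // -huv; ring.
  have hev : forall t : k, u.[t] * (FA`_n).[t] - v.[t] * (- FB`_n).[t] = 1.
    move=> t; have := congr1 (horner^~ t) huv; rewrite !hornerE => <-.
    by ring.
  have P0 := PP_map (horner_eval 0) HG; have P1 := PP_map (horner_eval 1) HG.
  rewrite -!evPE !ev_tr in P0 P1.
  have h := ps_homot' HG; rewrite !ev_tr in h.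
  have h0 := etrans (hev 0) (esym (expr1n k 2)); have h1 := hev 1.
  have K0 := Kgen H h0 (oner_neq0 k) HM P0.
  have H'' := etrans H' (esym (expr1n k 2)).
  have K1' := Kgen h1 H'' (oner_neq0 k) P1 HN.
  rewrite sc1 in K0.
  exact: ec_trans K0 (ec_trans h K1').
Qed.

Lemma usim_Inv n x y : usim n x y -> Inv n x y.
Proof.
elim => {x y}.
- move=> x y; exact: Inv_step.
- move=> x; exact: Inv_refl.
- move=> x y _; exact: Inv_sym.
- move=> x y z _ h1 _ h2; exact: Inv_trans h1 h2.
Qed.

Lemma psim_usim n x y : psim n x y -> usim n x y.
Proof.
elim => {x y}.
- move=> x y [FA FB HP]; apply: (@us_homot' n (FA, FB)); exact: PP_UP.
- move=> x; exact: ec_refl.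
- move=> x y _ IH; exact: ec_sym.
- move=> x y z _ h1 _ h2; exact: ec_trans h1 h2.
Qed.

Lemma usim_scale n p c : UP n p -> c != 0 -> usim n p (tr c 0 0 c p).
Proof.
case: p => A B HU hc; apply: ec_step.
rewrite /tr /= !scale0r addr0 add0r; exact: us_scale.
Qed.

Lemma usim_sc n p lam : UP n p -> lam != 0 -> usim n p (sc lam p).
Proof.
move=> HU hl.
have H1 : lam * lam^-1 - 0 * 0 = 1 by rewrite mulr0 subr0 mulfV.
apply: ec_trans (usim_SL H1 HU) _.
have -> : sc lam p = tr lam^-1 0 0 lam^-1 (tr lam 0 0 lam^-1 p).
  rewrite sc_tr tr_comp; apply: tr_ext; rewrite ?mulr0 ?mul0r ?addr0 ?add0r //.
  - by rewrite mulVf.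
  - by rewrite expr2 invfM.
apply: usim_scale; last by rewrite invr_eq0.
exact: UP_tr1.
Qed.

End K.

Theorem lemma4p4 (k : fieldType) (n : nat) :
  (forall A B : {poly k}, Upoint n A B ->
     exists A' B' : {poly k}, Ppoint n A' B' /\ usim n (A, B) (A', B')) /\
  (forall fA fB gA gB : {poly k}, Ppoint n fA fB -> Ppoint n gA gB ->
     (usim n (fA, fB) (gA, gB) <->
      exists lam : k, lam != 0 /\ psim n (fA, fB) (gA, lam ^- 2 *: gB))).
Proof.
split.
  move=> A B HU; have HU' : UP n (A, B) by [].
  have [a [b [c [d [H HP]]]]] := Pt_UP HU'.
  exists (tr a b c d (A, B)).1, (tr a b c d (A, B)).2; split; first exact: HP.
  rewrite -surjective_pairing; exact: usim_SL.
move=> fA fB gA gB Hf Hg; split.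
  move=> /usim_Inv [H _].
  have h1 : (1 : k) * 1 - 0 * 0 = 1 by rewrite mulr1 mulr0 subr0.
  have Hf' : PP n (tr 1 0 0 1 (fA, fB)) by rewrite tr_id.
  have Hg' : PP n (tr 1 0 0 1 (gA, gB)) by rewrite tr_id.
  have [lam [hl hp]] := H _ _ _ _ _ _ _ _ h1 h1 Hf' Hg'.
  by exists lam; split => //; move: hp; rewrite !tr_id.
case=> lam [hl hp].
apply: ec_trans (psim_usim hp) _; apply: ec_sym.
have -> : (gA, lam ^- 2 *: gB) = sc lam (gA, gB) by [].
by apply: usim_sc => //; apply: PP_UP.
Qed.
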